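(* Let $C=\{c_1,\dots,c_m\}$ and let $\mathcal{T}=\mathrm{CP}(c_1,\dots,c_m)$. Given a vote $v$ over $C$, let $\widehat{v}$ be the vote over $C$ such that, for each $j\in[m]$, if $c_j$ is ranked in position $i$ in $v$, then $c_i$ is ranked in position $m-j+1$ in $\widehat{v}$. If $v$ is in the support of $\mathcal{D}_{\mathrm{GS}}^{\mathcal{T}}$, then $\widehat{v}$ is single-peaked with respect to the axis $c_1\lhd c_2\lhd\dots\lhd c_m$.
   Context: A vote over $C$ is a total order on $C$ (position 1 is the top). $\mathrm{CP}(c_1,\dots,c_m)$ is the rooted ordered binary caterpillar tree with internal nodes $x_1,\dots,x_{m-1}$ (root $x_1$), where for $j\in[m-2]$ node $x_j$ has left child $c_j$ and right child $x_{j+1}$, and $x_{m-1}$ has children $c_{m-1}$ (left) and $c_m$ (right). A vote is consistent with $\mathcal{T}$ if it equals the left-to-right order of leaves of the tree obtained by reversing the order of children of some set of internal nodes; $\mathcal{D}_{\mathrm{GS}}^{\mathcal{T}}$ is the uniform distribution over votes consistent with $\mathcal{T}$, so its support is the set of consistent votes. A vote $v$ is single-peaked with respect to an axis (a linear order $\lhd$ of $C$) if for every $t\in[m]$ the $t$ top-ranked candidates of $v$ form an interval of $\lhd$. *)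

(* Defs.v *)
From mathcomp Require Import all_boot all_fingroup.
Set Implicit Arguments. Unset Strict Implicit. Unset Printing Implicit Defensive.

Inductive btree (A : Type) : Type :=
| Leaf of A
| Node of btree A & btree A.
Arguments Leaf {A}.
Arguments Node {A}.

Inductive leaf_order {A : Type} : btree A -> seq A -> Prop :=
| lo_leaf a : leaf_order (Leaf a) [:: a]
| lo_keep l r sl sr : leaf_order l sl -> leaf_order r sr ->
    leaf_order (Node l r) (sl ++ sr)
| lo_swap l r sl sr : leaf_order l sl -> leaf_order r sr ->
    leaf_order (Node l r) (sr ++ sl).

(* Caterpillar CP(c_1, ..., c_m): x_j has left child c_j and right child
   x_{j+1}; x_{m-1} has children c_{m-1}, c_m. *)
Fixpoint cp_aux {A : Type} (a : A) (s : seq A) : btree A :=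
  match s with
  | [::] => Leaf a
  | b :: s' => Node (Leaf a) (cp_aux b s')
  end.
Definition caterpillar {A : Type} (c : seq A) : option (btree A) :=
  match c with [::] => None | a :: s => Some (cp_aux a s) end.

(* A vote over candidates 'I_m (candidate c_{j+1} is the ordinal j) is a
   bijection from positions (0-based, position 0 = top) to candidates. *)
Definition vote_seq (m : nat) (v : {perm 'I_m}) : seq 'I_m :=
  [seq v i | i <- enum 'I_m].

(* Consistency with a tree; the support of D_GS^T is the set of such votes. *)
Definition consistent (m : nat) (T : btree 'I_m) (v : {perm 'I_m}) : Prop :=
  leaf_order T (vote_seq v).

Definition is_interval (T : eqType) (axis : seq T) (S : pred T) : Prop :=
  exists i k, forall x, S x = (x \in take k (drop i axis)).

Definition single_peaked (T : eqType) (axis vote : seq T) : Prop :=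
  forall t, t <= size vote -> is_interval axis (fun x => x \in take t vote).

(* Main.v *)
Require Import Defs.
From mathcomp Require Import all_boot all_fingroup.
From mathcomp Require Import zify.

Lemma lo_mem (A : eqType) (l : seq A) (a : A) s :
  leaf_order (cp_aux a l) s -> forall x, x \in s -> x \in a :: l.
Proof.
elim: l a s => [|b l IH] a s /=.
  by move=> H; inversion H; subst.
move=> H; inversion H; subst => x; rewrite mem_cat => /orP [] Hx.
- by inversion H2; subst; rewrite mem_seq1 in Hx; rewrite inE Hx.
- by rewrite inE (IH _ _ H4 _ Hx) orbT.
- by rewrite inE (IH _ _ H4 _ Hx) orbT.
- by inversion H2; subst; rewrite mem_seq1 in Hx; rewrite inE Hx.
Qed.

Lemma lo_size (A : eqType) (l : seq A) (a : A) s :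
  leaf_order (cp_aux a l) s -> size s = (size l).+1.
Proof.
elim: l a s => [|b l IH] a s /=.
  by move=> H; inversion H; subst.
move=> H; inversion H; subst; inversion H2; subst;
  rewrite size_cat (IH _ _ H4) /=; lia.
Qed.

Lemma key (A : eqType) (x0 : A) (l : seq A) (a : A) s n :
  uniq (a :: l) -> leaf_order (cp_aux a l) s ->
  exists i k, i + k <= size s /\ forall idx, idx < size s ->
    (nth x0 s idx \in drop n (a :: l)) = (i <= idx < i + k).
Proof.
elim: l a s n => [|b l IH] a s n /=.
  move=> _ H; inversion H; subst.
  case: n => [|n].
    by exists 0, 1; split => //; case => [|idx] //=; rewrite mem_seq1 eqxx.
  by exists 0, 0; split => //= idx; rewrite ltn0 andbF; case: idx => //.
case/andP => anl ubl H.
case: n => [|n].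
  exists 0, (size s); split => // idx Hidx.
  rewrite drop0 Hidx (@lo_mem _ (b :: l) a s H) //; exact: mem_nth.
have anotin : a \notin drop n (b :: l).
  by apply/negP => /mem_drop; apply/negP.
inversion H; subst; inversion H2; subst.
- have [i [k [Hs Hi]]] := IH _ _ n ubl H4.
  exists i.+1, k; split; first by rewrite /= ; lia.
  case => [|idx] /= Hidx; first by rewrite (negbTE anotin).
  by rewrite Hi.
- have [i [k [Hs Hi]]] := IH _ _ n ubl H4.
  exists i, k; split; first by rewrite size_cat /=; lia.
  move=> idx; rewrite size_cat addn1 ltnS leq_eqVlt => /orP [/eqP ->|Hidx].
    rewrite nth_cat ltnn subnn /= (negbTE anotin); lia.
  by rewrite nth_cat Hidx Hi.
Qed.

Lemma mem_interval m (x : 'I_m) i k :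
  (x \in take k (drop i (enum 'I_m))) = (i <= x < i + k).
Proof.
rewrite -(mem_map val_inj) map_take map_drop val_enum_ord drop_iota take_iota
  mem_iota add0n.
case: x => x /= Hx; lia.
Qed.

Theorem theorem3 (m : nat) (T : btree 'I_m) (v w : {perm 'I_m}) :
  2 <= m ->
  caterpillar (enum 'I_m) = Some T ->
  consistent T v ->
  (forall i j : 'I_m, v i = j -> w (rev_ord j) = i) ->
  single_peaked (enum 'I_m) (vote_seq w).
Proof.
move=> m2 HT Hc Hw t.
rewrite /vote_seq size_map size_enum_ord => Ht.
case: m m2 T v w HT Hc Hw Ht => [//|m'] m2 T v w HT Hc Hw Ht.
rewrite /consistent.
move: HT Hc.
case E: (enum 'I_m'.+1) => [|a l] //= [<-] Hc.
have U : uniq (a :: l) by rewrite -E enum_uniq.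
have [i [k [_ Hi]]] := @key _ ord0 l a _ (m'.+1 - t) U Hc.
exists i, k => x.
rewrite -E mem_interval.
have Hsz : size (vote_seq v) = m'.+1 by rewrite size_map size_enum_ord.
have := Hi x; rewrite Hsz ltn_ord => /(_ isT) <-.
rewrite /vote_seq (nth_map ord0) ?size_enum_ord ?ltn_ord // nth_ord_enum.
rewrite -[w a :: _]/(map w (a :: l)) -E.
have -> : (x \in take t [seq w i0 | i0 <- enum 'I_m'.+1]) =
          (m'.+1 - t <= v x).
  have Hx : x = w (rev_ord (v x)) by rewrite (Hw x (v x)).
  rewrite in_take_leq; last by rewrite size_map size_enum_ord.
  rewrite {1}Hx index_map; last exact: perm_inj.
  rewrite index_enum_ord /=.
  have := ltn_ord (v x); lia.
rewrite -(mem_map val_inj) map_drop val_enum_ord drop_iota mem_iota add0n.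
case: (v x) => y Hy /=; lia.
Qed.
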